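(* Let $a,b,c,k,m>0$ and consider the system $$\frac{dx}{dt}=bx(1-x-cy),\qquad \frac{dy}{dt}=y\Big(\frac{1}{1+kx}-y-ax-mxy\Big)$$ with $x(0)>0$, $y(0)>0$. Then the solutions are bounded; in fact $\limsup_{t\to+\infty}x(t)\le 1$ and $\limsup_{t\to+\infty}y(t)\le 1$.
   Context: All parameters $a,b,c,k,m$ are positive constants. *)

(* Defs.v *)
From Stdlib Require Import Reals.
From Coquelicot Require Import Coquelicot.
Open Scope R_scope.

Definition is_solution (a b c k m : R) (x y : R -> R) : Prop :=
  (forall t, 0 < t ->
     derivable_pt_lim x t (b * x t * (1 - x t - c * y t)) /\
     derivable_pt_lim y t (y t * (/ (1 + k * x t) - y t - a * x t - m * x t * y t))) /\
  filterlim x (at_right 0) (locally (x 0)) /\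
  filterlim y (at_right 0) (locally (y 0)).

Definition limsup_le (f : R -> R) (L : R) : Prop :=
  forall eps, 0 < eps -> exists T, forall t, T <= t -> f t <= L + eps.

(* Main.v *)
Require Import Defs.
From Stdlib Require Import Reals Lra Psatz Classical.
From Coquelicot Require Import Coquelicot.
Open Scope R_scope.

Definition phi (u : R) := (Rmax u 0)^2.

Lemma phi_taylor u v : Rabs (phi v - phi u - 2 * Rmax u 0 * (v - u)) <= (v-u)^2.
Proof.
  unfold phi, Rmax; destruct (Rle_dec u 0) as [?|Hu%Rnot_le_lt], (Rle_dec v 0) as [?|Hv%Rnot_le_lt]; pose proof (pow2_ge_0 (v-u)); apply Rabs_le; split; nra.
Qed.

Lemma phi_deriv u : derivable_pt_lim phi u (2 * Rmax u 0).
Proof.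
  intros eps Heps. exists (mkposreal eps Heps). intros h Hh0 Hh. simpl in Hh.
  pose proof (phi_taylor u (u+h)) as T.
  replace (u + h - u) with h in T by ring.
  assert (Hp : 0 < Rabs h) by (apply Rabs_pos_lt; auto).
  replace ((phi (u + h) - phi u) / h - 2 * Rmax u 0)
    with ((phi (u + h) - phi u - 2 * Rmax u 0 * h) / h) by (field; auto).
  unfold Rdiv; rewrite Rabs_mult, Rabs_inv.
  apply (Rmult_lt_reg_r (Rabs h)); auto.
  rewrite Rmult_assoc, Rinv_l by lra.
  assert (h^2 = Rabs h * Rabs h) by (rewrite <- Rabs_mult; rewrite Rabs_right; nra).
  nra.
Qed.

Lemma der_cont f t l : derivable_pt_lim f t l -> continuity_pt f t.
Proof. intro H. apply derivable_continuous_pt. exists l. exact H. Qed.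

Lemma barrier f d t0 L :
  (forall t, t0 <= t -> derivable_pt_lim f t (d t)) ->
  (forall t, t0 <= t -> L < f t -> d t <= 0) ->
  f t0 <= L -> forall t, t0 <= t -> f t <= L.
Proof.
  intros Hd Hn H0 t Ht.
  destruct (Req_dec t t0) as [->|Hne]; [lra|].
  set (G := fun s => phi (f s - L)).
  assert (HG : forall c, t0 <= c <= t -> derivable_pt_lim G c (2 * Rmax (f c - L) 0 * d c)).
  { intros c Hc. unfold G.
    assert (E: derivable_pt_lim (fun s => f s - L) c (d c - 0)).
    { apply (derivable_pt_lim_minus f (fun _ => L)). apply Hd; lra. apply derivable_pt_lim_const. }
    replace (2 * Rmax (f c - L) 0 * d c) with (2 * Rmax (f c - L) 0 * (d c - 0)) by ring.
    exact (derivable_pt_lim_comp (fun s => f s - L) phi c _ _ E (phi_deriv _)). }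
  destruct (MVT_cor2 G _ t0 t ltac:(lra) HG) as [c [Hc1 Hc2]].
  assert (Hs : 2 * Rmax (f c - L) 0 * d c <= 0).
  { unfold Rmax; destruct (Rle_dec (f c - L) 0); [nra|].
    assert (d c <= 0) by (apply Hn; lra). nra. }
  assert (G t0 = 0) by (unfold G, phi, Rmax; destruct (Rle_dec (f t0 - L) 0); [ring|lra]).
  assert (G t <= 0) by nra.
  unfold G, phi, Rmax in *. destruct (Rle_dec (f t - L) 0); [lra|nra].
Qed.

Lemma pos_lemma f h t0 t1 K : t0 < t1 ->
  (forall t, t0 <= t <= t1 -> derivable_pt_lim f t (f t * h t)) ->
  (forall t, t0 <= t <= t1 -> Rabs (h t) <= K) -> 0 < f t0 -> 0 < f t1.
Proof.
  intros Ht Hd Hh H0.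
  set (F := mult_fct (comp (fun u => u^2) f) (comp exp (fun s => 2*K*(s-t0)))).
  assert (nz : forall t, t0 < t <= t1 -> f t <> 0).
  { intros t Hti.
    set (F' := fun c => ((INR 2 * (f c)^(2-1)) * (f c * h c)) * comp exp (fun s => 2*K*(s-t0)) c
               + comp (fun u => u^2) f c * (exp (2*K*(c-t0)) * (2*K*(1-0)))).
    assert (HF : forall c, t0 <= c <= t -> derivable_pt_lim F c (F' c)).
    { intros c Hc. unfold F, F'. apply (derivable_pt_lim_mult _ _ c).
      - apply (derivable_pt_lim_comp f (fun u => u^2)). apply Hd; lra. apply derivable_pt_lim_pow.
      - apply (derivable_pt_lim_comp (fun s => 2*K*(s-t0)) exp).
        + apply (derivable_pt_lim_scal (fun s => s - t0) (2*K) c (1-0)). apply (derivable_pt_lim_minus id (fun _ => t0)).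
          apply derivable_pt_lim_id. apply derivable_pt_lim_const.
        + apply derivable_pt_lim_exp. }
    destruct (MVT_cor2 F F' t0 t ltac:(lra) HF) as [c [Hc1 Hc2]].
    assert (Hk : Rabs (h c) <= K) by (apply Hh; lra).
    apply Rabs_le_between in Hk.
    assert (Hp : 0 <= F' c).
    { pose proof (exp_pos (2*K*(c-t0))). pose proof (pow2_ge_0 (f c)).
      assert (E : F' c = 2 * (f c ^ 2 * exp (2 * K * (c - t0))) * (h c + K)) by (unfold F', comp; simpl; ring).
      rewrite E. apply Rmult_le_pos; [|lra]. apply Rmult_le_pos; [lra|]. apply Rmult_le_pos; lra. }
    unfold F, mult_fct, comp in Hc1. rewrite Rminus_diag, Rmult_0_r, exp_0 in Hc1.
    intro E. rewrite E in Hc1. nra. }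
  destruct (Rlt_le_dec 0 (f t1)) as [|Hn]; auto.
  assert (Hneg : f t1 < 0) by (destruct Hn; auto; exfalso; apply (nz t1); lra).
  destruct (Ranalysis5.IVT_interv (fun s => - f s) t0 t1) as [z [Hz1 Hz2]]; auto; try lra.
  intros s Hs. apply (der_cont _ _ (- (f s * h s))). apply (derivable_pt_lim_opp f). apply Hd; lra.
  exfalso. destruct (Req_dec z t0) as [->|]. lra. apply (nz z); lra.
Qed.

Lemma rc f : filterlim f (at_right 0) (locally (f 0)) ->
  forall e, 0 < e -> exists d, 0 < d /\ forall t, 0 < t < d -> Rabs (f t - f 0) < e.
Proof.
  intros H e He. apply filterlim_locally with (eps := mkposreal e He) in H.
  destruct H as [d Hd]. exists d. split. apply cond_pos.
  intros t Ht. apply Hd. 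
  - unfold ball; simpl; unfold AbsRing_ball, abs, minus, plus, opp; simpl.
    rewrite Ropp_0, Rplus_0_r, Rabs_right; lra.
  - lra.
Qed.

Lemma bounded g t0 t1 : (forall t, t0 <= t <= t1 -> continuity_pt g t) ->
  exists K, forall t, t0 <= t <= t1 -> Rabs (g t) <= K.
Proof.
  intro Hc. destruct (Rle_dec t0 t1) as [Hl|Hl].
  - destruct (continuity_ab_maj (fun t => Rabs (g t)) t0 t1 Hl) as [M [HM _]].
    + intros c Hc'. apply (continuity_pt_comp g Rabs). apply Hc; auto. apply Rcontinuity_abs.
    + exists (Rabs (g M)). exact HM.
  - exists 0. intros; lra.
Qed.

Lemma pos_all f h : filterlim f (at_right 0) (locally (f 0)) -> 0 < f 0 ->
  (forall t, 0 < t -> derivable_pt_lim f t (f t * h t)) ->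
  (forall t0 t1, 0 < t0 -> exists K, forall t, t0 <= t <= t1 -> Rabs (h t) <= K) ->
  forall t, 0 <= t -> 0 < f t.
Proof.
  intros Hrc H0 Hd Hb.
  destruct (rc f Hrc (f 0 / 2) ltac:(lra)) as [d [Hd0 Hdd]].
  assert (Hs : forall t, 0 < t < d -> 0 < f t).
  { intros t Ht. specialize (Hdd t Ht). apply Rabs_lt_between in Hdd. lra. }
  intros t Ht. destruct (Req_dec t 0) as [->|]; auto.
  destruct (Rlt_le_dec t d); [apply Hs; lra|].
  destruct (Hb (d/2) t ltac:(lra)) as [K HK].
  apply (pos_lemma f h (d/2) t K); try lra.
  - intros s Hs'. apply Hd. lra.
  - exact HK.
  - apply Hs. lra.
Qed.

Lemma ub_limsup f d beta : filterlim f (at_right 0) (locally (f 0)) -> 0 < beta ->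
  (forall t, 0 <= t -> 0 < f t) ->
  (forall t, 0 < t -> derivable_pt_lim f t (d t)) ->
  (forall t, 0 < t -> d t <= beta * f t * (1 - f t)) ->
  (forall t, 0 <= t -> Rabs (f t) <= f 0 + 1) /\
  (forall eps, 0 < eps -> exists T, forall t, T <= t -> f t <= 1 + eps).
Proof.
  intros Hrc Hb Hp Hd Hdb.
  assert (Hneg : forall L t, 1 <= L -> 0 < t -> L < f t -> d t <= 0).
  { intros L t HL Ht Hf. specialize (Hdb t Ht). pose proof (Hp t ltac:(lra)).
    assert (Hq : 0 <= f t * (f t - 1)) by (apply Rmult_le_pos; lra).
    assert (0 <= beta * (f t * (f t - 1))) by (apply Rmult_le_pos; lra).
    nra. }
  assert (H0 := Hp 0 (Rle_refl 0)).
  destruct (rc f Hrc 1 ltac:(lra)) as [de [Hde0 Hdd]].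
  assert (Hs : forall t, 0 < t < de -> f t <= f 0 + 1).
  { intros t Ht. specialize (Hdd t Ht). apply Rabs_lt_between in Hdd. lra. }
  assert (UB : forall t, 0 <= t -> f t <= f 0 + 1).
  { intros t Ht. destruct (Req_dec t 0) as [->|]; [lra|].
    destruct (Rlt_le_dec t de); [apply Hs; lra|].
    apply (barrier f d (de/2) (f 0 + 1)); try lra.
    - intros; apply Hd; lra.
    - intros s Hs' Hf. apply (Hneg (f 0 + 1)); lra.
    - apply Hs; lra. }
  split.
  { intros t Ht. rewrite Rabs_right. apply UB; auto. left; apply Hp; auto. }
  intros eps Heps.
  set (D := (f 0 + 1) / (beta * eps)).
  assert (HD : 0 < D) by (unfold D; apply Rdiv_lt_0_compat; nra).
  assert (HDe : beta * eps * D = f 0 + 1) by (unfold D; field; split; lra).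
  destruct (classic (exists T, 1 <= T <= 1 + D /\ f T <= 1 + eps)) as [[T [HT1 HT2]]|Hno].
  - exists T. intros t Ht. apply (barrier f d T (1 + eps)); auto.
    + intros; apply Hd; lra.
    + intros s Hs' Hf. apply (Hneg (1 + eps)); lra.
  - exfalso.
    assert (Hall : forall T, 1 <= T <= 1 + D -> 1 + eps < f T).
    { intros T HT. destruct (Rlt_le_dec (1 + eps) (f T)); auto. exfalso. apply Hno. exists T; auto. }
    destruct (MVT_cor2 f d 1 (1 + D) ltac:(lra)) as [c [Hc1 Hc2]].
    { intros c Hc. apply Hd. lra. }
    assert (Hfc := Hall c ltac:(lra)).
    assert (Hdc := Hdb c ltac:(lra)).
    assert (Hq1 : (f c - 1 - eps) * f c > 0) by (apply Rmult_lt_0_compat; lra).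
    assert (Hq2 : eps * (f c - 1) > 0) by (apply Rmult_lt_0_compat; lra).
    assert (Hq : f c * (1 - f c) <= - eps) by nra.
    assert (d c <= - (beta * eps)).
    { apply Rle_trans with (beta * (f c * (1 - f c))). rewrite <- Rmult_assoc; auto.
      assert (0 <= beta * (- eps - f c * (1 - f c))) by (apply Rmult_le_pos; lra). lra. }
    assert (f 1 <= f 0 + 1) by (apply UB; lra).
    assert (0 < f (1 + D)) by (apply Hp; lra).
    replace (1 + D - 1) with D in Hc1 by ring.
    nra.
Qed.

Theorem theorem2 (a b c k m : R) (x y : R -> R) :
  0 < a -> 0 < b -> 0 < c -> 0 < k -> 0 < m ->
  is_solution a b c k m x y ->
  0 < x 0 -> 0 < y 0 ->
  (exists M, forall t, 0 <= t -> Rabs (x t) <= M /\ Rabs (y t) <= M) /\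
  limsup_le x 1 /\ limsup_le y 1.
Proof.
  intros Ha Hb Hc Hk Hm [Hd [Hxc Hyc]] Hx0 Hy0.
  assert (Cx : forall t, 0 < t -> continuity_pt x t).
  { intros t Ht. exact (der_cont _ _ _ (proj1 (Hd t Ht))). }
  assert (Cy : forall t, 0 < t -> continuity_pt y t).
  { intros t Ht. exact (der_cont _ _ _ (proj2 (Hd t Ht))). }
  assert (BXY : forall t0 t1, 0 < t0 -> exists Kx Ky, forall t, t0 <= t <= t1 ->
             - Kx <= x t <= Kx /\ - Ky <= y t <= Ky).
  { intros t0 t1 Ht0.
    destruct (bounded x t0 t1) as [Kx HKx]. { intros; apply Cx; lra. }
    destruct (bounded y t0 t1) as [Ky HKy]. { intros; apply Cy; lra. }
    exists Kx, Ky. intros t Ht. split; apply Rabs_le_between; auto. }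
  assert (Px : forall t, 0 <= t -> 0 < x t).
  { apply (pos_all x (fun t => b * (1 - x t - c * y t)) Hxc Hx0).
    - intros t Ht. replace (x t * (b * (1 - x t - c * y t))) with (b * x t * (1 - x t - c * y t)) by ring.
      apply (proj1 (Hd t Ht)).
    - intros t0 t1 Ht0. destruct (BXY t0 t1 Ht0) as [Kx [Ky HK]].
      exists (b * (1 + Kx + c * Ky)). intros t Ht. destruct (HK t Ht) as [[H1 H2] [H3 H4]].
      assert (c * y t <= c * Ky) by nra. assert (- (c * Ky) <= c * y t) by nra.
      assert (Hu1 : 1 - x t - c * y t <= 1 + Kx + c * Ky) by lra.
      assert (Hu2 : - (1 + Kx + c * Ky) <= 1 - x t - c * y t) by lra.
      apply Rabs_le. split.
      + assert (0 <= b * ((1 - x t - c * y t) + (1 + Kx + c * Ky))) by (apply Rmult_le_pos; lra). lra.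
      + assert (0 <= b * ((1 + Kx + c * Ky) - (1 - x t - c * y t))) by (apply Rmult_le_pos; lra). lra. }
  assert (Py : forall t, 0 <= t -> 0 < y t).
  { apply (pos_all y (fun t => / (1 + k * x t) - y t - a * x t - m * x t * y t) Hyc Hy0).
    - intros t Ht. apply (proj2 (Hd t Ht)).
    - intros t0 t1 Ht0. destruct (BXY t0 t1 Ht0) as [Kx [Ky HK]].
      exists (1 + Ky + a * Kx + m * (Kx * Ky)). intros t Ht. destruct (HK t Ht) as [[H1 H2] [H3 H4]].
      assert (Hxp : 0 < x t) by (apply Px; lra).
      assert (Hi1 : 0 < / (1 + k * x t)) by (apply Rinv_0_lt_compat; nra).
      assert (Hi2 : / (1 + k * x t) <= 1).
      { rewrite <- Rinv_1. apply Rinv_le_contravar; nra. }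
      assert (Hxy1 : x t * y t <= Kx * Ky) by nra.
      assert (Hxy2 : - (Kx * Ky) <= x t * y t) by nra.
      assert (a * x t <= a * Kx) by nra.
      assert (m * (x t * y t) <= m * (Kx * Ky)) by nra.
      assert (- (m * (Kx * Ky)) <= m * (x t * y t)) by nra.
      apply Rabs_le. split; nra. }
  destruct (ub_limsup x (fun t => b * x t * (1 - x t - c * y t)) b Hxc Hb Px) as [UX LX].
  { intros t Ht. apply (proj1 (Hd t Ht)). }
  { intros t Ht. pose proof (Px t ltac:(lra)). pose proof (Py t ltac:(lra)).
    assert (0 <= b * c * (x t * y t)) by (apply Rmult_le_pos; [nra|nra]). nra. }
  destruct (ub_limsup y (fun t => y t * (/ (1 + k * x t) - y t - a * x t - m * x t * y t)) 1 Hyc ltac:(lra) Py) as [UY LY].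
  { intros t Ht. apply (proj2 (Hd t Ht)). }
  { intros t Ht. pose proof (Px t ltac:(lra)) as Hxp. pose proof (Py t ltac:(lra)) as Hyp.
    assert (Hi2 : / (1 + k * x t) <= 1).
    { rewrite <- Rinv_1. apply Rinv_le_contravar; nra. }
    assert (0 <= y t * (1 - / (1 + k * x t) + a * x t + m * x t * y t)).
    { apply Rmult_le_pos; [lra|]. assert (0 <= m * x t * y t) by (apply Rmult_le_pos; nra). nra. }
    nra. }
  split; [|split; assumption].
  exists (Rmax (x 0 + 1) (y 0 + 1)). intros t Ht. split.
  - apply Rle_trans with (x 0 + 1). apply UX; auto. apply Rmax_l.
  - apply Rle_trans with (y 0 + 1). apply UY; auto. apply Rmax_r.
Qed.
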